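(* Let $\mathcal{T}$ be a finite forest of binary decision trees over $\mathbb{R}^d$, $b\ge 0$ an integer, and $\mathcal{D}$ a finite nonempty multiset of labelled instances $(\vec{x},y)\in\mathbb{R}^d\times\{-1,+1\}$. Then $$FLB(A_b,\mathcal{D})\ \le\ ELB(A_b,\mathcal{D})\ \le\ Acc_{A_b}(\mathcal{D}),$$ i.e., both quantities defined below are lower bounds on the accuracy of $\mathcal{T}$ under the attacker $A_b$.
   Context: Decision trees: a tree is either a leaf $\lambda(\hat y)$, $\hat y\in\{-1,+1\}$, or an internal node $\sigma(f,v,t_l,t_r)$ (feature $f$, threshold $v\in\mathbb{R}$, subtrees $t_l,t_r$); input $\vec{x}$ goes to $t_l$ if $x_f\le v$, else to $t_r$; $t(\vec{x})$ is the label of the leaf reached, and the traversal path of $\vec{x}$ in $t$ is the sequence of internal nodes visited. Forest prediction: $\mathcal{T}(\vec{x})=+1$ if $\sum_{t\in\mathcal{T}}t(\vec{x})>0$, else $-1$. Attacker: $A_b(\vec{x})=\{\vec{x}'\in\mathbb{R}^d:\|\vec{x}-\vec{x}'\|_0\le b\}$. Accuracy under attack: let $E=\{(\vec{x},y)\in\mathcal{D}: y\,\mathcal{T}(\vec{x})<0\}$, $E'=\{(\vec{x},y)\in\mathcal{D}\setminus E:\exists\vec{x}'\in A_b(\vec{x}),\ y\,\mathcal{T}(\vec{x}')<0\}$, and $Acc_{A_b}(\mathcal{D})=\frac{|\mathcal{D}|-|E\cup E'|}{|\mathcal{D}|}$. Covering sets: for $(\vec{x},y)\in\mathcal{D}$,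 let $\omega(\vec{x},y)=|\{t\in\mathcal{T}:t(\vec{x})\neq y\}|$. For each feature $f$, let $S_f^+$ (resp. $S_f^-$) be the set of trees $t\in\mathcal{T}$ with $t(\vec{x})=y$ whose traversal path of $\vec{x}$ contains a node $\sigma(f,v,\cdot,\cdot)$ with $x_f\le v$ true (resp. false). Call a collection $S'$ of these sets admissible if $|S'|\le b$ and for no $f$ does $S'$ contain both $S_f^+$ and $S_f^-$. FLB: $\overline{S_{FLB}}(\vec{x},y)=\max_{S' \text{ admissible}}\sum_{S_i\in S'}|S_i|$ (equivalently, the sum of sizes of the $b$ largest sets chosen greedily by size, never taking both $S_f^+$ and $S_f^-$ for the same $f$). ELB: $\overline{S_{ELB}}(\vec{x},y)=\max_{S'\text{ admissible}}\big|\bigcup_{S_i\in S'}S_i\big|$. For $X\in\{FLB,ELB\}$ let $E_X=\{(\vec{x},y)\in\mathcal{D}\setminus E:\ \omega(\vec{x},y)+\overline{S_X}(\vec{x},y)\ge|\mathcal{T}|/2\}$ and $X(A_b,\mathcal{D})=\frac{|\mathcal{D}|-|E\cup E_X|}{|\mathcal{D}|}$. *)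

(* Defs.v *)
From HB Require Import structures.
From mathcomp Require Import all_boot all_order all_algebra.
From mathcomp Require Import reals.
From Stdlib Require Import ClassicalEpsilon.
Set Implicit Arguments. Unset Strict Implicit. Unset Printing Implicit Defensive.
Import Order.TTheory GRing.Theory Num.Theory.
Local Open Scope ring_scope.

Definition pb (P : Prop) : bool :=
  if excluded_middle_informative P then true else false.

Definition lab (y : bool) : int := if y then 1 else -1.

Section Trees.
Variables (R : realType) (d : nat).

Definition input := 'I_d -> R.

Inductive tree :=
| Leaf of bool
| Node of 'I_d & R & tree & tree.

Fixpoint eval_tree (t : tree) (x : input) : bool :=
  match t with
  | Leaf y => y
  | Node f v tl tr => if x f <= v then eval_tree tl x else eval_tree tr x
  end.

Fixpoint path_has (t : tree) (x : input) (f : 'I_d) (s : bool) : bool :=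
  match t with
  | Leaf _ => false
  | Node g v tl tr =>
      ((g == f) && ((x g <= v) == s)) ||
      (if x g <= v then path_has tl x f s else path_has tr x f s)
  end.

(* A forest of n trees, indexed by 'I_n (so repeated trees count separately). *)
Variable n : nat.
Variable T : 'I_n -> tree.

Definition forest_pred (x : input) : bool :=
  (0 < \sum_(i < n) lab (eval_tree (T i) x))%R.

Definition misclassified (x : input) (y : bool) : bool :=
  (lab y * lab (forest_pred x) < 0)%R.

Definition l0dist (x x' : input) : nat := #|[set f : 'I_d | x f != x' f]|.

Definition in_attack (b : nat) (x x' : input) : Prop := (l0dist x x' <= b)%N.

Definition omega (x : input) (y : bool) : nat :=
  #|[set i : 'I_n | eval_tree (T i) x != y]|.

(* S_f^+ (s = true) and S_f^- (s = false). *)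
Definition Sset (x : input) (y : bool) (f : 'I_d) (s : bool) : {set 'I_n} :=
  [set i : 'I_n | (eval_tree (T i) x == y) && path_has (T i) x f s].

(* A collection S' of the sets S_f^{+/-} is encoded by c : 'I_d -> option bool,
   c f = Some true (resp. Some false) meaning S_f^+ (resp. S_f^-) is in S';
   this encoding forbids taking both S_f^+ and S_f^- for the same f. *)
Definition admissible (b : nat) (c : {ffun 'I_d -> option bool}) : bool :=
  (#|[set f : 'I_d | c f != None]| <= b)%N.

Definition chosen (c : {ffun 'I_d -> option bool}) (f : 'I_d) (s : bool) : bool :=
  c f == Some s.

Definition S_FLB (b : nat) (x : input) (y : bool) : nat :=
  \max_(c : {ffun 'I_d -> option bool} | admissible b c)
     \sum_(fs : 'I_d * bool | chosen c fs.1 fs.2) #|Sset x y fs.1 fs.2|.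

Definition S_ELB (b : nat) (x : input) (y : bool) : nat :=
  \max_(c : {ffun 'I_d -> option bool} | admissible b c)
     #|\bigcup_(fs : 'I_d * bool | chosen c fs.1 fs.2) Sset x y fs.1 fs.2|.

(* Datasets: finite multisets of labelled instances, as sequences. *)
Definition dataset := seq (input * bool).

Definition inE_ (p : input * bool) : bool := misclassified p.1 p.2.

Definition inE' (b : nat) (p : input * bool) : bool :=
  ~~ inE_ p && pb (exists x', in_attack b p.1 x' /\ misclassified x' p.2).

(* Acc_{A_b}(D) = (|D| - |E u E'|) / |D|, counting with multiplicity. *)
Definition acc_attack (b : nat) (D : dataset) : rat :=
  ((size D)%:R - (count (fun p => inE_ p || inE' b p) D)%:R) / (size D)%:R.

Definition inEX (SX : input -> bool -> nat) (p : input * bool) : bool :=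
  ~~ inE_ p && ((n%:R / 2 : rat) <= ((omega p.1 p.2 + SX p.1 p.2)%N)%:R).

Definition bound_X (SX : input -> bool -> nat) (D : dataset) : rat :=
  ((size D)%:R - (count (fun p => inE_ p || inEX SX p) D)%:R) / (size D)%:R.

Definition FLB (b : nat) (D : dataset) : rat := bound_X (S_FLB b) D.
Definition ELB (b : nat) (D : dataset) : rat := bound_X (S_ELB b) D.

End Trees.

(* Main.v *)
Require Import Defs.
From HB Require Import structures.
From mathcomp Require Import all_boot all_order all_algebra.
From mathcomp Require Import reals.
From Stdlib Require Import ClassicalEpsilon.
From mathcomp Require Import zify.
Import Order.TTheory GRing.Theory Num.Theory.
Local Open Scope ring_scope.

Lemma sumlab n (e : 'I_n -> bool) :
  \sum_(i < n) lab (e i) = #|[set i | e i]|%:R - #|[set i | ~~ e i]|%:R.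
Proof.
rewrite (bigID (fun i => e i)) /=.
rewrite (eq_bigr (fun _ => 1)); last by move=> i ->.
rewrite [X in _ + X](eq_bigr (fun _ => -1)); last by move=> i /negbTE ->.
rewrite !sumr_const mulNrn; congr (_ - _); congr (_%:R); apply: eq_card => i; rewrite inE //.
Qed.

Lemma cardnn n (e : 'I_n -> bool) : (#|[set i | e i]| + #|[set i | ~~ e i]|)%N = n.
Proof.
rewrite -cardsUI.
have -> : [set i | e i] :&: [set i | ~~ e i] = set0 by apply/setP=> i; rewrite !inE andbN.
rewrite cards0 addn0 -[RHS]card_ord; apply: eq_card => i; rewrite !inE orbN //.
Qed.

Lemma diverge (R : realType) d (t : tree R d) (x x' : input R d) :
  eval_tree t x != eval_tree t x' ->
  exists f, (x f != x' f) && path_has t x f (x f < x' f).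
Proof.
elim: t => [y|g v tl IHl tr IHr] /=; first by rewrite eqxx.
case hx: (x g <= v); case hx': (x' g <= v) => H.
- have [f /andP [H1 H2]] := IHl H; exists f; by rewrite H1 H2 orbT.
- have hlt : x g < x' g by apply: (le_lt_trans hx); rewrite ltNge hx'.
  by exists g; rewrite (lt_eqF hlt) eqxx hlt.
- have hlt : x' g < x g by apply: (le_lt_trans hx'); rewrite ltNge hx.
  by exists g; rewrite (gt_eqF hlt) eqxx ltNge (ltW hlt).
- have [f /andP [H1 H2]] := IHr H; exists f; by rewrite H1 H2 orbT.
Qed.

Lemma union_le (I T : finType) (P : pred I) (S : I -> {set T}) :
  (#|\bigcup_(j | P j) S j| <= \sum_(j | P j) #|S j|)%N.
Proof.
elim/big_rec2: _ => [|j A m _ IH]; first by rewrite cards0.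
apply: leq_trans (leq_card_setU _ _).1 _; by rewrite leq_add2l.
Qed.

Lemma ELB_le_FLB (R : realType) d n (T : 'I_n -> tree R d) b x y :
  (S_ELB T b x y <= S_FLB T b x y)%N.
Proof.
apply/bigmax_leqP => c Hc; apply: leq_trans (leq_bigmax_cond c Hc).
exact: union_le.
Qed.

Lemma bound_mono (s c1 c2 : nat) : (c1 <= c2)%N -> (0 < s)%N ->
  ((s%:R - c2%:R) / s%:R : rat) <= (s%:R - c1%:R) / s%:R.
Proof.
move=> H Hs; rewrite ler_pM2r ?invr_gt0 ?ltr0n // lerD2l lerN2 ler_nat //.
Qed.

Lemma point (R : realType) d n (T : 'I_n -> tree R d) b (p : input R d * bool) :
  inE' T b p -> inEX T (S_ELB T b) p.
Proof.
case: p => x y /andP [HnE]; rewrite /pb; case: excluded_middle_informative => // [[x' [Hatt Hmis]]] _.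
rewrite /inEX HnE /=.
pose e i := eval_tree (T i) x'.
pose m := #|[set i | e i != y]|.
have H1 : (n%:R / 2 : rat) <= m%:R.
  rewrite ler_pdivrMr // -natrM ler_nat.
  move: Hmis; rewrite /misclassified /forest_pred.
  have Hs := @sumlab _ e; rewrite /e in Hs; rewrite Hs.
  have Hc := @cardnn _ e.
  rewrite /m; simpl in Hatt; case: y {HnE m} => /=.
  + have -> : #|[set i | e i != true]| = #|[set i | ~~ e i]| by apply: eq_card => i; rewrite !inE; case: (e i).
    rewrite /lab; case: ifP => H0 /=; first by [].
    move=> _; move: H0; rewrite subr_gt0 ltr_nat => /negbT; rewrite -leqNgt => Hle; rewrite /e in Hc *; move: Hle Hc; move: #|[set i | eval_tree (T i) x']| #|[set i | ~~ eval_tree (T i) x']| => a c; lia.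
  + have -> : #|[set i | e i != false]| = #|[set i | e i]| by apply: eq_card => i; rewrite !inE; case: (e i).
    rewrite /lab; case: ifP => H0 /=; last by [].
    move=> _; move: H0; rewrite subr_gt0 ltr_nat => Hle; rewrite /e in Hc *; move: Hle Hc; move: #|[set i | eval_tree (T i) x']| #|[set i | ~~ eval_tree (T i) x']| => a c; lia.
apply: (le_trans H1); rewrite ler_nat.
pose c : {ffun 'I_d -> option bool} :=
  [ffun f => if x f != x' f then Some (x f < x' f) else None].
have Hadm : admissible b c.
  rewrite /admissible; apply: leq_trans Hatt; apply: eq_leq; apply: eq_card => f.
  by rewrite !inE ffunE; case: (x f != x' f).
pose U := \bigcup_(fs : 'I_d * bool | chosen c fs.1 fs.2) Sset T x y fs.1 fs.2.
have HU : (#|U| <= S_ELB T b x y)%N by exact: (leq_bigmax_cond c Hadm).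
apply: (@leq_trans (#|[set i | eval_tree (T i) x != y] :|: U|)).
  apply: subset_leq_card; apply/subsetP => i; rewrite !inE => Hi.
  case Hx: (eval_tree (T i) x != y) => //=.
  move/negbFE/eqP: Hx => Hx.
  have : eval_tree (T i) x != eval_tree (T i) x' by rewrite Hx eq_sym.
  move/diverge => [f /andP [Hf Hp]].
  apply/bigcupP; exists (f, x f < x' f) => /=.
    by rewrite /chosen ffunE Hf.
  by rewrite inE Hx eqxx Hp.
apply: leq_trans (leq_card_setU _ _).1 _; rewrite /omega leq_add2l //.
Qed.

Theorem mainTheorem4 (R : realType) (d n : nat) (T : 'I_n -> tree R d)
  (b : nat) (D : dataset R d) (HD : (0 < size D)%N) :
  FLB T b D <= ELB T b D /\ ELB T b D <= acc_attack T b D.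
Proof.
split; apply: bound_mono => //; apply: sub_count => p /orP [->//|H]; apply/orP; right.
- move: H; rewrite /inEX => /andP [-> H] /=; apply: le_trans H _.
  by rewrite ler_nat leq_add2l ELB_le_FLB.
- exact: point.
Qed.
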